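(* Let $\lambda>0$, $\Sigma\in\mathbb{R}^{d\times d}$ symmetric positive definite, and $\mathcal{R}_{\mathrm{soft},\infty}(\mu)=\operatorname{tr}(\Sigma)-2\lambda\mu^\top\Sigma^2\mu+\lambda^2(\mu^\top\Sigma\mu)(\mu^\top\Sigma^2\mu)$. The function $\mathcal{R}_{\mathrm{soft},\infty}$ is coercive, and for any $\mu_0\in\mathbb{R}^d$ the solution $\mu_\infty$ of $\dot\mu_\infty=-\nabla\mathcal{R}_{\mathrm{soft},\infty}(\mu_\infty)$, $\mu_\infty(0)=\mu_0$, is bounded: there exists $\rho\ge\|\mu_0\|$ such that \[ \{\mu_\infty(t):t\ge0\}\subset\{\mu\in\mathbb{R}^d:\mathcal{R}_{\mathrm{soft},\infty}(\mu)\le\mathcal{R}_{\mathrm{soft},\infty}(\mu_0)\}\subset B(0,\rho). \]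
   Context: $B(0,\rho)$ is the closed ball of radius $\rho$ centered at $0$. *)

(* Defs.v *)
From HB Require Import structures.
From mathcomp Require Import all_boot all_order all_algebra.
From mathcomp Require Import all_classical all_reals all_analysis.
Set Implicit Arguments. Unset Strict Implicit. Unset Printing Implicit Defensive.
Import Order.TTheory GRing.Theory Num.Theory.
Import numFieldNormedType.Exports.
Local Open Scope ring_scope.

Definition dotv {R : realType} {d : nat} (u v : 'rV[R]_d) : R :=
  \sum_(i < d) u 0 i * v 0 i.
Definition enorm {R : realType} {d : nat} (u : 'rV[R]_d) : R :=
  Num.sqrt (dotv u u).

Definition qform {R : realType} {d : nat} (A : 'M[R]_d) (mu : 'rV[R]_d) : R :=
  (mu *m A *m mu^T) 0 0.

Definition symmetric_pd {R : realType} {d : nat} (S : 'M[R]_d) : Prop :=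
  S^T = S /\ forall v : 'rV[R]_d, v != 0 -> 0 < qform S v.

Definition Rsoft {R : realType} {d : nat} (lam : R) (S : 'M[R]_d)
  (mu : 'rV[R]_d) : R :=
  \tr S - 2 * lam * qform (S *m S) mu
  + lam ^+ 2 * (qform S mu * qform (S *m S) mu).

Definition is_gradient {R : realType} {d : nat} (f : 'rV[R]_d -> R)
  (x g : 'rV[R]_d) : Prop :=
  differentiable f x /\ ('d f x : 'rV[R]_d -> R) = (fun h => dotv g h).

Definition coercive {R : realType} {d : nat} (f : 'rV[R]_d -> R) : Prop :=
  forall M : R, exists r : R, forall mu, r <= enorm mu -> M <= f mu.

Definition grad_flow_sol {R : realType} {d : nat} (f : 'rV[R]_d -> R)
  (mu0 : 'rV[R]_d) (mu : R -> 'rV[R]_d) : Prop :=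
  mu 0 = mu0 /\
  {within `[0, +oo[, continuous mu}%classic /\
  forall t : R, 0 < t ->
    exists g, is_gradient f (mu t) g /\ is_derive t 1 mu (- g).

(* Main.v *)
Require Import Defs.
From HB Require Import structures.
From mathcomp Require Import all_boot all_order all_algebra.
From mathcomp Require Import all_classical all_reals all_analysis.
From mathcomp Require Import ring lra.
Import Order.TTheory GRing.Theory Num.Theory.
Local Open Scope ring_scope.

Module Helpers.
Set Implicit Arguments. Unset Strict Implicit. Unset Printing Implicit Defensive.
Import numFieldNormedType.Exports.


Section H.
Variable R : realType.

Lemma mulmxtr00 d (u w : 'rV[R]_d) : (u *m w^T) 0 0 = dotv u w.
Proof. rewrite mxE /dotv; apply: eq_bigr => i _; by rewrite mxE. Qed.

Lemma qformE d (A : 'M[R]_d) v : qform A v = dotv (v *m A) v.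
Proof. by rewrite /qform mulmxtr00. Qed.

Lemma dotv_ge0 d (u : 'rV[R]_d) : 0 <= dotv u u.
Proof. by apply: sumr_ge0 => i _; rewrite -expr2 sqr_ge0. Qed.

Lemma dotv_gt0 d (u : 'rV[R]_d) : u != 0 -> 0 < dotv u u.
Proof.
move=> u0; rewrite lt_def dotv_ge0 andbT; apply/negP => /eqP H.
move/negP: u0; apply; apply/eqP/matrixP => i j.
rewrite (ord1 i) mxE; apply/eqP; rewrite -sqrf_eq0 expr2.
apply/eqP; apply: (psumr_eq0P _ H) => //= k _; by rewrite -expr2 sqr_ge0.
Qed.

Lemma dotvZ d k (u w : 'rV[R]_d) : dotv (k *: u) (k *: w) = k ^+ 2 * dotv u w.
Proof.
rewrite /dotv mulr_sumr; apply: eq_bigr => i _; rewrite !mxE; ring.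
Qed.

Lemma qformZ d (A : 'M[R]_d) k (u : 'rV[R]_d) : qform A (k *: u) = k ^+ 2 * qform A u.
Proof.
by rewrite !qformE -scalemxAl dotvZ.
Qed.

Lemma cont_sum (T : topologicalType) n (F : 'I_n -> T -> R) :
  (forall i, continuous (F i)) -> continuous (fun x => \sum_(i < n) F i x).
Proof.
elim: n F => [|n IH] F hF.
  have -> : (fun x => \sum_(i < 0) F i x) = fun=> 0.
    by apply: funext => x; rewrite big_ord0.
  exact: cst_continuous.
have -> : (fun x => \sum_(i < n.+1) F i x) =
   (fun x => \sum_(i < n) F (widen_ord (leqnSn n) i) x) + F ord_max.
  by apply: funext => x; rewrite big_ord_recr.
move=> x; apply: continuousD; first exact: IH.
exact: hF.
Qed.

Lemma qform_cont d (A : 'M[R]_d) : continuous (qform A).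
Proof.
have -> : qform A = fun v => \sum_(j < d) (\sum_(k < d) v 0 k * A k j) * v 0 j.
  apply: funext => v; rewrite qformE /dotv; apply: eq_bigr => j _; by rewrite mxE.
apply: cont_sum => j x; apply: continuousM; last exact: coord_continuous.
apply: cont_sum => k y; apply: continuousM; first exact: coord_continuous.
exact: cst_continuous.
Qed.

Lemma dotv_cont d : continuous (fun v : 'rV[R]_d => dotv v v).
Proof.
apply: cont_sum => j x; apply: continuousM; exact: coord_continuous.
Qed.

End H.

Section SB.
Local Open Scope classical_set_scope.

Lemma qform_lb (R : realType) d (A : 'M[R]_d) :
  (forall v, v != 0 -> 0 < qform A v) ->
  exists2 c, 0 < c & forall v, c * dotv v v <= qform A v.
Proof.
case: d A => [|n] A Apos.
  exists 1 => // v; by rewrite /dotv /qform mxE !big_ord0 mulr0 lexx.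
pose K := [set v : 'rV[R]_n.+1 | dotv v v = 1].
have Mnco : compact [set v : 'rV[R]_n.+1 | forall i, `[-1, 1]%classic (v ord0 i)].
  have := (@rV_compact R n.+1 (fun=> `[-1, 1]%classic) (fun _ => @segment_compact R (-1) 1)).
  exact.
have Kcl : closed K.
  apply: (@preimage_closed _ _ (fun v : 'rV[R]_n.+1 => dotv v v) [set x | x = 1]).
    move=> v _; exact: dotv_cont.
  exact: closed_eq.
have cK : compact K.
  apply: subclosed_compact Kcl Mnco _.
  move=> v Kv i /=; rewrite in_itv /= -ler_norml.
  have : v ord0 i ^+ 2 <= 1.
    rewrite -Kv /dotv (bigD1 i) //= -expr2 lerDl.
    by apply: sumr_ge0 => k _; rewrite -expr2 sqr_ge0.
  by rewrite -real_normK ?num_real // expr_le1.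
have K0 : K !=set0.
  exists (delta_mx 0 0); rewrite /K /= /dotv (bigD1 0) //= big1 ?mxE /=.
    by rewrite addr0 mulr1.
  by move=> i /negbTE ni; rewrite !mxE ni mulr0.
have cq : {within K, continuous (qform A)}.
  apply: continuous_subspaceT => v; exact: qform_cont.
have [w wK wmin] := compact_EVT_min K0 cK cq.
move: wK; rewrite inE /K /= => wK.
have w0 : w != 0.
  apply/negP => /eqP w0; move: wK; rewrite w0 /dotv big1 => [/eqP|i _].
    by rewrite eq_sym oner_eq0.
  by rewrite mxE mul0r.
exists (qform A w); first exact: Apos.
move=> v; have [->|v0] := eqVneq v 0.
  by rewrite /dotv /qform big1 ?mulr0 ?mul0mx ?mxE ?lexx // => i _; rewrite mxE mul0r.
have dv := dotv_gt0 v0.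
pose s := Num.sqrt (dotv v v).
have s0 : 0 < s by rewrite sqrtr_gt0.
have ss : s ^+ 2 = dotv v v by rewrite sqr_sqrtr // ltW.
have := wmin (s^-1 *: v); rewrite inE /K /= dotvZ qformZ exprVn ss mulVf ?gt_eqF //.
move=> /(_ erefl) H.
have := ler_wpM2r (ltW dv) H.
by rewrite mulrAC mulVf ?gt_eqF // mul1r.
Qed.

End SB.

Section SC.
Local Open Scope classical_set_scope.

Lemma flow_decr (R : realType) d (f : 'rV[R]_d -> R) mu0 mu :
  continuous f -> grad_flow_sol f mu0 mu -> forall t, 0 <= t -> f (mu t) <= f mu0.
Proof.
move=> cf [mu00 [cmu hmu]] t; rewrite le_eqVlt => /predU1P [<-|t0].
  by rewrite mu00.
pose F := f \o mu.
have dF : forall x, x \in `]0, t[%R -> derivable F x 1 /\ F^`() x <= 0.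
  move=> x; rewrite in_itv /= => /andP [x0 _].
  have [g [[dfx dfe] dmu]] := hmu x x0.
  have := dmu; case=> dm dmv.
  have dmx : differentiable mu x by apply/derivable1_diffP.
  have dFx : differentiable F x := differentiable_comp dmx dfx.
  split; first exact: diff_derivable.
  rewrite derive1E deriveE // diff_comp // /= dfe -deriveE // dmv.
  have -> : dotv g (- g) = - dotv g g.
    by rewrite /dotv -sumrN; apply: eq_bigr => i _; rewrite mxE mulrN.
  by rewrite oppr_le0 dotv_ge0.
have cF : {within `[0, t], continuous F}.
  have cmu' : {within `[0, t], continuous mu}.
    apply: continuous_subspaceW cmu => x /=; rewrite !in_itv /= => /andP [-> _].
    by [].
  move=> x; exact: (@continuous_comp (subspace `[0, t]) _ _ mu f x (cmu' x) (cf (mu x))).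
have := @ler0_derive1_le_cc R F 0 t (fun x hx => (dF x hx).1) (fun x hx => (dF x hx).2) cF t 0.
rewrite /F /= mu00; apply.
- by rewrite in_itv /= lexx ltW.
- by rewrite in_itv /= lexx ltW.
- exact: ltW.
Qed.

End SC.


Lemma Rsoft_cont (R : realType) d (lam : R) (S : 'M[R]_d) : continuous (Rsoft lam S).
Proof.
move=> x.
have -> : Rsoft lam S = (fun _ => \tr S) + ((fun _ => - (2 * lam)) \* qform (S *m S))
   + ((fun _ => lam ^+ 2) \* (qform S \* qform (S *m S))).
  apply: funext => mu; rewrite /Rsoft !fctE /=; ring.
apply: continuousD; first apply: continuousD.
- exact: cst_continuous.
- apply: continuousM; [exact: cst_continuous| exact: qform_cont].
- apply: continuousM; first exact: cst_continuous.
  apply: continuousM; exact: qform_cont.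
Qed.

End Helpers.
Import Helpers.
Import numFieldNormedType.Exports.

Theorem lemma1 (R : realType) (d : nat) (lam : R) (S : 'M[R]_d) :
  0 < lam -> symmetric_pd S ->
  coercive (Rsoft lam S) /\
  forall (mu0 : 'rV[R]_d) (mu : R -> 'rV[R]_d),
    grad_flow_sol (Rsoft lam S) mu0 mu ->
    exists rho : R, enorm mu0 <= rho /\
      (forall t : R, 0 <= t -> Rsoft lam S (mu t) <= Rsoft lam S mu0) /\
      (forall v : 'rV[R]_d, Rsoft lam S v <= Rsoft lam S mu0 -> enorm v <= rho).
Proof.
move=> lam0 [Ssym Spos].
have SSpos : forall v : 'rV[R]_d, v != 0 -> 0 < qform (S *m S) v.
  move=> v v0.
  have -> : qform (S *m S) v = dotv (v *m S) (v *m S).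
    by rewrite /qform -mulmxtr00 trmx_mul Ssym !mulmxA.
  apply: dotv_gt0; apply/negP => /eqP vS0.
  by move: (Spos v v0); rewrite /qform vS0 mul0mx mxE ltxx.
have [c1 c10 H1] := qform_lb Spos.
have [c2 c20 H2] := qform_lb SSpos.
have coer : coercive (Rsoft lam S).
  move=> M.
  pose K1 := (2 * lam + 1) / (lam ^+ 2 * c1).
  have K10 : 0 < K1 by rewrite divr_gt0 // ?mulr_gt0 ?exprn_gt0 //; lra.
  exists (1 + K1 + `|M - \tr S| / c2) => mu hr.
  set e := dotv mu mu.
  have e0 : 0 <= e by exact: dotv_ge0.
  set r := 1 + K1 + `|M - \tr S| / c2 in hr.
  have r1 : 1 <= r.
    rewrite /r -addrA lerDl; apply: addr_ge0; [exact: ltW | apply: divr_ge0 => //; exact: ltW].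
  have re : r <= e.
    have ss : Num.sqrt e ^+ 2 = e by rewrite sqr_sqrtr.
    move: hr; rewrite /enorm -/e => hr.
    have s0 : 0 <= Num.sqrt e by rewrite sqrtr_ge0.
    nra.
  have q0 : 0 <= `|M - \tr S| / c2 by apply: divr_ge0 => //; exact: ltW.
  have eK1 : K1 <= e by move: re; rewrite /r; lra.
  have eq : `|M - \tr S| / c2 <= e by move: re; rewrite /r; lra.
  have lc0 : 0 < lam ^+ 2 * c1 by rewrite mulr_gt0 // exprn_gt0.
  have h1 := ler_wpM2r (ltW lc0) eK1.
  rewrite /K1 divfK ?gt_eqF // in h1.
  have h2 := ler_wpM2r (ltW c20) eq.
  rewrite divfK ?gt_eqF // in h2.
  have h3 : M - \tr S <= `|M - \tr S| by exact: ler_norm.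
  have ha := H1 mu; have hb := H2 mu.
  rewrite -/e in ha hb.
  set a := qform S mu in ha *; set b := qform (S *m S) mu in hb *.
  have h4 : lam ^+ 2 * c1 * e <= lam ^+ 2 * a.
    by rewrite -mulrA ler_wpM2l // exprn_ge0 // ltW.
  have b0 : 0 <= b by apply: le_trans hb; rewrite mulr_ge0 // ltW.
  have h5 : 0 <= (lam ^+ 2 * a - 2 * lam - 1) * b.
    apply: mulr_ge0 => //; lra.
  rewrite /Rsoft -/a -/b.
  have -> : \tr S - 2 * lam * b + lam ^+ 2 * (a * b) =
     \tr S + b + (lam ^+ 2 * a - 2 * lam - 1) * b by ring.
  lra.
split=> // mu0 mu hsol.
have [r hr] := coer (Rsoft lam S mu0 + 1).
exists (Num.max r (enorm mu0)); split; first by rewrite le_max lexx orbT.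
split; first exact: (flow_decr (@Rsoft_cont R d lam S) hsol).
move=> v hv; rewrite le_max; apply/orP; left.
rewrite leNgt; apply/negP => /ltW /hr; lra.
Qed.
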